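(* The rational group $\mathcal{R}$ is full: every homeomorphism of $\{0,1\}^\omega$ that locally agrees with $\mathcal{R}$ belongs to $\mathcal{R}$.
   Context: An asynchronous binary transducer is $(S,s_0,t,o)$ with $S$ finite, $s_0\in S$, $t\colon S\times\{0,1\}\to S$, $o\colon S\times\{0,1\}\to\{0,1\}^*$. For a state $s$ and sequence $\sigma_1\sigma_2\cdots$ let $s_1=s$, $s_{n+1}=t(s_n,\sigma_n)$, and $o(s,\sigma_1\sigma_2\cdots)=o(s_1,\sigma_1)o(s_2,\sigma_2)\cdots$. A homeomorphism $f$ of $\{0,1\}^\omega$ is rational if some transducer satisfies $f(\psi)=o(s_0,\psi)$ for all $\psi\in\{0,1\}^\omega$; $\mathcal{R}$ is the group of rational homeomorphisms. A homeomorphism $h$ locally agrees with a group $G$ if every point has a neighborhood $U$ and some $g\in G$ with $h|_U=g|_U$. *)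

(* Defs.v *)
From HB Require Import structures.
From mathcomp Require Import all_boot all_order all_algebra.
From mathcomp Require Import all_classical all_reals all_analysis.
Set Implicit Arguments. Unset Strict Implicit. Unset Printing Implicit Defensive.

(* Cantor space {0,1}^omega with the product topology: [cantor_space]
   from mathcomp-analysis (points are functions nat -> bool). *)

Definition is_homeomorphism (T : topologicalType) (f : T -> T) : Prop :=
  exists g : T -> T, cancel f g /\ cancel g f /\ continuous f /\ continuous g.

(* Asynchronous binary transducer (S, s0, t, o), S finite. *)
Record transducer := Transducer {
  tr_state : finType;
  tr_init : tr_state;
  tr_trans : tr_state -> bool -> tr_state;
  tr_out : tr_state -> bool -> seq bool }.

(* s_1 = s, s_{n+1} = t(s_n, sigma_n); here indexed from 0:
   run s psi n = s_{n+1}, i.e. the state before reading psi n. *)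
Fixpoint tr_run (A : transducer) (s : tr_state A) (psi : nat -> bool) (n : nat)
  : tr_state A :=
  match n with
  | 0 => s
  | n'.+1 => tr_trans (tr_run s psi n') (psi n')
  end.

Fixpoint tr_out_prefix (A : transducer) (s : tr_state A) (psi : nat -> bool)
  (n : nat) : seq bool :=
  match n with
  | 0 => [::]
  | n'.+1 => tr_out_prefix s psi n' ++ tr_out (tr_run s psi n') (psi n')
  end.

(* The infinite word o(s, psi) equals phi : the concatenation of the outputs
   is infinite and every finite partial concatenation is a prefix of phi. *)
Definition tr_output_is (A : transducer) (s : tr_state A) (psi phi : nat -> bool)
  : Prop :=
  (forall m, exists n, m <= size (tr_out_prefix s psi n)) /\
  (forall n i, i < size (tr_out_prefix s psi n) ->
     nth false (tr_out_prefix s psi n) i = phi i).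

Definition rational_homeo (f : cantor_space -> cantor_space) : Prop :=
  is_homeomorphism f /\
  exists A : transducer, forall psi : cantor_space,
    tr_output_is (tr_init A) psi (f psi).

Definition locally_agrees (G : (cantor_space -> cantor_space) -> Prop)
  (h : cantor_space -> cantor_space) : Prop :=
  forall x : cantor_space, exists U : set cantor_space,
    nbhs x U /\ exists g, G g /\ forall y, U y -> h y = g y.

(* Main.v *)
Require Import Defs.
From HB Require Import structures.
From mathcomp Require Import all_boot all_order all_algebra.
From mathcomp Require Import all_classical all_reals all_analysis.
Set Implicit Arguments. Unset Strict Implicit. Unset Printing Implicit Defensive.
Local Open Scope classical_set_scope.

Definition cyl (x : cantor_space) (n : nat) : set cantor_space :=
  [set y | forall i, (i < n)%N -> y i = x i].

Lemma cyl_nbhs (x : cantor_space) n : nbhs x (cyl x n).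
Proof.
elim: n => [|n IH].
  by apply: filterS filterT => y _ i.
have H : nbhs x (proj n @^-1` [set x n] : set cantor_space).
  exact: (@proj_continuous nat (fun _ => bool) n x [set x n] (discrete_set1 _)).
apply: filterS (filterI IH H) => y [Hy Hn] i.
rewrite ltnS leq_eqVlt => /orP[/eqP ->|]; first exact: Hn.
exact: Hy.
Qed.

Lemma nbhs_cyl (x : cantor_space) U : nbhs x U -> exists n, cyl x n `<=` U.
Proof.
move=> Ux; apply: contrapT => Hno.
have Hy : forall n, exists y, cyl x n y /\ ~ U y.
  move=> n; apply: contrapT => Hn; apply: Hno; exists n => y Hy.
  apply: contrapT => nU; apply: Hn; by exists y.
pose y n := projT1 (cid (Hy n)).
have y1 n : cyl x n (y n) by rewrite /y; case: (cid _) => ? [].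
have y2 n : ~ U (y n) by rewrite /y; case: (cid _) => ? [].
have cv : y @ \oo --> (x : {ptws nat -> bool}).
  apply/(@pointwise_cvgP nat bool (y @ \oo) x _) => t.
  move=> A At; rewrite nbhs_simpl /=.
  have At' : A (x t) by exact: nbhs_singleton.
  exists t.+1 => // n /= Hn.
  by rewrite (y1 n t Hn).
have [N _ HN] := cv U Ux.
by apply: (y2 N); apply: (HN N) => /=.
Qed.

Lemma cyl_open (x : cantor_space) n : open (cyl x n).
Proof.
rewrite openE => y Hy; rewrite /interior.
apply: filterS (cyl_nbhs y n) => z Hz i Hi.
by rewrite Hz // Hy.
Qed.

Lemma uniform_N (good : set cantor_space -> Prop) :
  (forall U V, V `<=` U -> good U -> good V) ->
  (forall x : cantor_space, exists U, nbhs x U /\ good U) ->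
  exists N, forall y, good (cyl y N).
Proof.
move=> mono loc.
have Hn : forall x : cantor_space, exists n, good (cyl x n).
  move=> x; have [U [Ux gU]] := loc x.
  have [n Hn] := nbhs_cyl Ux; exists n; exact: mono gU.
pose nx x := projT1 (cid (Hn x)).
have gnx x : good (cyl x (nx x)) by rewrite /nx; case: (cid _).
have := cantor_space_compact; rewrite compact_cover => /(_ cantor_space setT (fun x => cyl x (nx x))).
case.
- by move=> i _; exact: cyl_open.
- move=> y _; exists y => //; rewrite /cyl /= => i.
move=> D' _ HD.
exists (\max_(x <- finmap.enum_fset D') nx x) => y.
have [x xD Hx] := HD y I.
apply: mono (gnx x) => z Hz i Hi.
rewrite Hz ?Hx //.
apply: leq_trans Hi _.
by apply: leq_bigmax_seq.
Qed.
Lemma tr_run_ext (A : transducer) (s : tr_state A) (psi phi : nat -> bool) n :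
  (forall i, (i < n)%N -> psi i = phi i) -> tr_run s psi n = tr_run s phi n.
Proof.
elim: n => [//|n IH] H /=.
by rewrite IH ?H // => i Hi; apply: H; exact: ltnW.
Qed.

Lemma tr_out_prefix_ext (A : transducer) (s : tr_state A) (psi phi : nat -> bool) n :
  (forall i, (i < n)%N -> psi i = phi i) ->
  tr_out_prefix s psi n = tr_out_prefix s phi n.
Proof.
elim: n => [//|n IH] H /=.
have H' : forall i, (i < n)%N -> psi i = phi i by move=> i Hi; apply: H; exact: ltnW.
by rewrite IH // (tr_run_ext s H') H.
Qed.

Lemma tr_out_prefix_mono (A : transducer) (s : tr_state A) (psi : nat -> bool) n m :
  (n <= m)%N -> (size (tr_out_prefix s psi n) <= size (tr_out_prefix s psi m))%N.
Proof.
move=> /subnKC <-; elim: (m - n)%N => [|k IH]; first by rewrite addn0.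
by rewrite addnS /= size_cat (leq_trans IH) // leq_addr.
Qed.

Section Build.
Variable N : nat.
Local Notation M := N.+1.
Local Notation W := {ffun 'I_M -> bool}.
Variable A : W -> transducer.

Definition St : finType := (((W * 'I_M)%type + {w : W & tr_state (A w)})%type).

Definition extw (w : W) : nat -> bool := fun i => w (inord i).

Definition upd (f : W) (k : 'I_M) (b : bool) : W :=
  [ffun i => if i == k then b else f i].

Definition Btrans (s : St) (b : bool) : St :=
  match s with
  | inl (f, k) =>
      if (k < N)%N then inl (upd f k b, inord k.+1)
      else inr (existT _ (upd f k b)
                  (tr_run (tr_init (A (upd f k b))) (extw (upd f k b)) M))
  | inr p => inr (existT _ (projT1 p) (tr_trans (projT2 p) b))
  end.

Definition Bout (s : St) (b : bool) : seq bool :=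
  match s with
  | inl (f, k) =>
      if (k < N)%N then [::]
      else tr_out_prefix (tr_init (A (upd f k b))) (extw (upd f k b)) M
  | inr p => tr_out (projT2 p) b
  end.

Definition B : transducer :=
  @Transducer St (inl ([ffun => false], ord0)) Btrans Bout.

Definition pre (psi : nat -> bool) : W := [ffun i : 'I_M => psi i].

Definition fn (psi : nat -> bool) n : W := [ffun i : 'I_M => (i < n)%N && psi i].

Lemma B_before (psi : nat -> bool) n : (n <= N)%N ->
  tr_run (tr_init B) psi n = inl (fn psi n, inord n) /\
  tr_out_prefix (tr_init B) psi n = [::].
Proof.
elim: n => [|n IH] Hn.
  split => //=; congr (inl (_, _)); last by apply: val_inj; rewrite /= inordK.
have [IH1 IH2] := IH (ltnW Hn).
have Hk : nat_of_ord (inord n : 'I_M) = n by rewrite inordK // ltnS ltnW.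
rewrite /= IH1 IH2 /= Hk Hn; split => //.
congr (inl (_, _)).
apply/ffunP => i; rewrite !ffunE.
case: eqP => [->|Hi]; first by rewrite Hk ltnSn.
have Hin : nat_of_ord i <> n by move=> E; apply: Hi; apply: val_inj; rewrite /= Hk.
have -> : (i < n.+1)%N = (i < n)%N by rewrite ltnS (leq_eqVlt (nat_of_ord i)); case: eqP.
by [].
Qed.

Lemma fnM psi : fn psi M = pre psi.
Proof. by apply/ffunP => i; rewrite !ffunE ltn_ord. Qed.

Lemma B_after (psi : nat -> bool) n : (M <= n)%N ->
  tr_run (tr_init B) psi n =
    inr (existT _ (pre psi) (tr_run (tr_init (A (pre psi))) psi n)) /\
  tr_out_prefix (tr_init B) psi n = tr_out_prefix (tr_init (A (pre psi))) psi n.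
Proof.
elim: n => [//|n IH] Hn.
rewrite leq_eqVlt in Hn; case/orP: Hn => [/eqP Hn|Hn].
  case: Hn => Hn; subst n.
  have [H1 H2] := B_before psi (leqnn N).
  have Hk : nat_of_ord (inord N : 'I_M) = N by rewrite inordK.
  have Hu : upd (fn psi N) (inord N) (psi N) = pre psi.
    rewrite -fnM; apply/ffunP => i; rewrite !ffunE.
    case: eqP => [->|Hi]; first by rewrite Hk ltnSn.
    have Hin : nat_of_ord i <> N by move=> E; apply: Hi; apply: val_inj; rewrite /= Hk.
    have -> : (i < N.+1)%N = (i < N)%N by rewrite ltnS (leq_eqVlt (nat_of_ord i)); case: eqP.
    by [].
  have Hext : forall i, (i < M)%N -> extw (pre psi) i = psi i.
    by move=> i Hi; rewrite /extw ffunE inordK.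
  have E1 := tr_run_ext (tr_init (A (pre psi))) Hext.
  have E2 := tr_out_prefix_ext (tr_init (A (pre psi))) Hext.
  rewrite [tr_run _ psi _]/= [tr_out_prefix _ psi _]/= H1 H2 /= Hk ltnn Hu.
  by move: E1 E2 => /= -> ->.
have [IH1 IH2] := IH Hn.
by rewrite /= IH1 IH2.
Qed.

Lemma B_correct (F : (nat -> bool) -> (nat -> bool)) :
  (forall psi, tr_output_is (tr_init (A (pre psi))) psi (F psi)) ->
  forall psi, tr_output_is (tr_init B) psi (F psi).
Proof.
move=> HA psi; have [HA1 HA2] := HA psi; split.
  move=> m; have [n Hn] := HA1 m; exists (maxn n M).
  have [_ ->] := B_after psi (leq_maxr n M).
  apply: leq_trans Hn _; apply: tr_out_prefix_mono; exact: leq_maxl.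
move=> n i Hi.
case: (leqP M n) => HnM.
  have [_ E] := B_after psi HnM; move: Hi; rewrite E => Hi.
  exact: HA2.
have [_ E] := B_before psi (HnM : (n <= N)%N); move: Hi; by rewrite E.
Qed.

End Build.

Theorem proposition2p3 :
  forall h : cantor_space -> cantor_space,
    is_homeomorphism h -> locally_agrees rational_homeo h -> rational_homeo h.
Proof.
move=> h hh hloc; split => //.
pose good (U : set cantor_space) := exists T : transducer,
  forall psi : cantor_space, U psi -> tr_output_is (tr_init T) psi (h psi).
have [N HN] : exists N, forall y, good (cyl y N).
  apply: uniform_N.
    move=> U V VU [T HT]; exists T => psi Vpsi; exact: HT (VU _ Vpsi).
  move=> x; have [U [Ux [g [[_ [T HT]] Hg]]]] := hloc x.
  exists U; split => //; exists T => psi Upsi; rewrite Hg //; exact: HT.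
have HA : forall w : {ffun 'I_N.+1 -> bool}, good (cyl (extw w) N.+1).
  move=> w; have [T HT] := HN (extw w); exists T => psi Hpsi; apply: HT.
  by move=> i Hi; apply: Hpsi; apply: ltnW.
pose A w := projT1 (cid (HA w)).
have HAs w : forall psi : cantor_space, cyl (extw w) N.+1 psi ->
    tr_output_is (tr_init (A w)) psi (h psi).
  by rewrite /A; case: (cid _).
exists (B A).
apply: (@B_correct N A h) => psi; apply: HAs => i Hi.
by rewrite /extw ffunE inordK.
Qed.
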